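(* For all $A,B\in{\sf Frm}$: if $\vdash_{\sf WF_{N_2}}A\vee B$, then $\vdash_{\sf WF_{N_2}}A$ or $\vdash_{\sf WF_{N_2}}B$.
   Context: Language: countably many atoms $p,q,\dots$, the constant $\bot$, and binary connectives $\wedge,\vee,\rightarrow$ ($\rightarrow$ is strict implication). ${\sf Frm}$ is the set of formulas built from atoms and $\bot$ with $\wedge,\vee,\rightarrow$; $A,B,C,D$ range over ${\sf Frm}$. The Hilbert system ${\sf WF_{N_2}}$ over ${\sf Frm}$ has axiom schemes $A\rightarrow(A\vee B)$; $B\rightarrow(A\vee B)$; $(A\wedge B)\rightarrow A$; $(A\wedge B)\rightarrow B$; $A\wedge(B\vee C)\rightarrow(A\wedge B)\vee(A\wedge C)$; $A\rightarrow A$; $\bot\rightarrow A$; and rules (from theorems to a theorem): from $A$ and $A\rightarrow B$ infer $B$; from $A$ infer $B\rightarrow A$; from $A\rightarrow B$ and $B\rightarrow C$ infer $A\rightarrow C$; from $A\rightarrow B$ and $A\rightarrow C$ infer $A\rightarrow(B\wedge C)$; from $A\rightarrow C$ and $B\rightarrow C$ infer $(A\vee B)\rightarrow C$; from $A$ and $B$ infer $A\wedge B$; (${\sf N_2}$) from $C\rightarrow A\vee D$ and $C\wedge B\rightarrow D$ infer $(A\rightarrow B)\rightarrow(C\rightarrow D)$. $\vdash_{\sf WF_{N_2}}A$ means $A$ is a theorem of this system. *)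

(* Defs.v *)
(* Formulas: countably many atoms (indexed by nat), bottom, /\, \/, strict implication. *)
Inductive Frm : Type :=
| Atom : nat -> Frm
| Bot : Frm
| And : Frm -> Frm -> Frm
| Or : Frm -> Frm -> Frm
| Imp : Frm -> Frm -> Frm.

Inductive Thm : Frm -> Prop :=
| ax_orI1 : forall A B, Thm (Imp A (Or A B))
| ax_orI2 : forall A B, Thm (Imp B (Or A B))
| ax_andE1 : forall A B, Thm (Imp (And A B) A)
| ax_andE2 : forall A B, Thm (Imp (And A B) B)
| ax_distr : forall A B C,
    Thm (Imp (And A (Or B C)) (Or (And A B) (And A C)))
| ax_id : forall A, Thm (Imp A A)
| ax_bot : forall A, Thm (Imp Bot A)
| r_mp : forall A B, Thm A -> Thm (Imp A B) -> Thm B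
| r_weak : forall A B, Thm A -> Thm (Imp B A)
| r_trans : forall A B C, Thm (Imp A B) -> Thm (Imp B C) -> Thm (Imp A C)
| r_andI : forall A B C, Thm (Imp A B) -> Thm (Imp A C) -> Thm (Imp A (And B C))
| r_orE : forall A B C, Thm (Imp A C) -> Thm (Imp B C) -> Thm (Imp (Or A B) C)
| r_adj : forall A B, Thm A -> Thm B -> Thm (And A B)
| r_N2 : forall A B C D,
    Thm (Imp C (Or A D)) -> Thm (Imp (And C B) D) ->
    Thm (Imp (Imp A B) (Imp C D)).

(* Main.v *)
Require Import Defs.

Fixpoint S (F : Frm) : Prop :=
  match F with
  | Atom _ => False
  | Bot => False
  | And A B => S A /\ S B
  | Or A B => S A \/ S B
  | Imp A B => Thm (Imp A B) /\ (S A -> S B)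
  end.

Lemma S_Thm : forall F, S F -> Thm F.
Proof.
  induction F; simpl; intros H; try contradiction.
  - destruct H; apply r_adj; auto.
  - destruct H.
    + eapply r_mp; [apply IHF1; exact H | apply ax_orI1].
    + eapply r_mp; [apply IHF2; exact H | apply ax_orI2].
  - tauto.
Qed.

Lemma Thm_S : forall F, Thm F -> S F.
Proof.
  induction 1; simpl.
  - split; [constructor | tauto].
  - split; [constructor | tauto].
  - split; [constructor | tauto].
  - split; [constructor | tauto].
  - split; [constructor | tauto].
  - split; [constructor | tauto].
  - split; [constructor | tauto].
  - simpl in IHThm2; tauto.
  - split; [apply r_weak; auto | tauto].
  - simpl in *; split; [eapply r_trans; eauto | tauto].
  - simpl in *; split; [apply r_andI; auto | tauto].
  - simpl in *; split; [apply r_orE; auto | tauto].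
  - split; auto.
  - simpl in *. assert (T : Thm (Imp (Imp A B) (Imp C D))) by (apply r_N2; auto).
    split; [exact T|]. intros [HAB HS]. split.
    + eapply r_mp; [exact HAB | exact T].
    + intros HC. destruct IHThm1 as [_ h1]. destruct IHThm2 as [_ h2].
      destruct (h1 HC); auto.
Qed.

Theorem corollary5p8 : forall A B : Frm, Thm (Or A B) -> Thm A \/ Thm B.
Proof.
  intros A B H. apply Thm_S in H. simpl in H.
  destruct H; [left | right]; apply S_Thm; auto.
Qed.
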